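(* Let $N\ge1$ and let $\Phi\in\mathbb R_N^{\otimes 4}$ be a real self-transpose tensor, i.e. with components satisfying $\Phi_{ijkl}=\Phi_{lkji}$ for all $i,j,k,l\in\{1,\dots,N\}$, distributed according to $$\mathcal Z_{\rm ST}(\lambda)=\int\mathcal D\Phi\,e^{-S_{\rm ST}[\Phi](\lambda)},\qquad S_{\rm ST}[\Phi](\lambda)=N\Big(\frac12\sum_{ijkl}\Phi_{ijkl}\Phi_{ijkl}+\frac{\lambda}{2}\sum_{ijkl}\Phi_{ijkl}\Phi_{ikjl}\Big).$$ Then $$\frac{\mathcal Z_{\rm ST}(\lambda)}{\mathcal Z_{\rm ST}(0)}=(1+\lambda)^{-\frac12\left(\frac{N(N+1)}{2}\right)^2}(1-\lambda)^{-\frac12\left(\frac{N(N-1)}{2}\right)^2}.$$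
   Context: $\mathcal D\Phi$ is Lebesgue measure on the real vector space of self-transpose tensors (product of $d\Phi_{ijkl}$ over a set of independent components). *)

(* Defs.v *)
From HB Require Import structures.
From mathcomp Require Import all_boot all_order all_algebra.
From mathcomp Require Import all_classical all_reals all_analysis.
Set Implicit Arguments. Unset Strict Implicit. Unset Printing Implicit Defensive.
Import Order.TTheory GRing.Theory Num.Theory.
Local Open Scope ring_scope.

Definition idx (N : nat) : finType := ('I_N * 'I_N * 'I_N * 'I_N)%type.

Definition trq N (t : idx N) : idx N :=
  let: (i, j, k, l) := t in (l, k, j, i).

Definition rep N (t : idx N) : idx N :=
  if (enum_rank t <= enum_rank (trq t))%N then t else trq t.

(* the independent components of a self-transpose tensor *)
Definition reps N : seq (idx N) := [seq t <- enum (idx N) | rep t == t].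

Definition tensor_of (R : realType) N (x : idx N -> R) : idx N -> R :=
  fun t => x (rep t).

Definition self_transpose (R : realType) N (Phi : idx N -> R) : Prop :=
  forall i j k l : 'I_N, Phi (i, j, k, l) = Phi (l, k, j, i).

(* For nonnegative
   integrands this is the integral against the product Lebesgue measure
   (Tonelli), i.e. against  prod_{c in s} dx_c. *)
Fixpoint iter_int (R : realType) (I : eqType) (s : seq I)
    (F : (I -> R) -> \bar R) (x0 : I -> R) : \bar R :=
  match s with
  | [::] => F x0
  | c :: s' =>
      (\int[@lebesgue_measure R]_(y in [set: R])
          iter_int s' F (fun i => if i == c then y else x0 i))%E
  end.

Definition S_ST (R : realType) N (lam : R) (Phi : idx N -> R) : R :=
  N%:R * (2^-1 * (\sum_(i < N) \sum_(j < N) \sum_(k < N) \sum_(l < N)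
                    Phi (i, j, k, l) * Phi (i, j, k, l))
          + lam / 2 * (\sum_(i < N) \sum_(j < N) \sum_(k < N) \sum_(l < N)
                    Phi (i, j, k, l) * Phi (i, k, j, l))).

(* Z_ST(lambda) = int DPhi exp(-S_ST[Phi](lambda)), DPhi = product of dPhi_t
   over the independent components t in reps N *)
Definition Z_ST (R : realType) N (lam : R) : \bar R :=
  iter_int (reps N) (fun x => (expR (- S_ST lam (tensor_of x)))%:E)
    (fun _ => 0).

(* Main.v *)
Require Import Defs.
From HB Require Import structures.
From mathcomp Require Import all_boot all_order all_algebra.
From mathcomp Require Import all_classical all_reals all_analysis.
From mathcomp Require Import measurable_realfun.
From mathcomp Require Import ring lra.
Import Order.TTheory GRing.Theory Num.Theory.
Local Open Scope ring_scope.


Lemma iter_int_ext (R : realType) (I : eqType) (s : seq I) F G x0 :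
  (forall x, F x = G x) -> @iter_int R I s F x0 = iter_int s G x0.
Proof. by move=> H; have -> : F = G by apply/funext. Qed.

Lemma iter_int_rcons (R : realType) (I : eqType) (s : seq I) c F x0 :
  @iter_int R I (rcons s c) F x0 =
  iter_int s (fun x => (\int[@lebesgue_measure R]_(y in [set: R])
       F (fun i => if i == c then y else x i))%E) x0.
Proof.
elim: s x0 => [|c' s IH] x0 //=.
by apply: eq_integral => y _; exact: IH.
Qed.

Lemma sum_if_eq (R : realType) (I : eqType) (U : seq I) (a : I) (v : R) :
  uniq U -> \sum_(r <- U) (if r == a then v else 0) = if a \in U then v else 0.
Proof.
move=> uU; rewrite -big_mkcond big_const_seq /= count_uniq_mem //.
by case: (a \in U) => /=; rewrite ?addr0.
Qed.

Lemma sqrt_split (R : realType) (a u : R) : 0 < a -> 0 <= u ->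
  Num.sqrt (u / a) = Num.sqrt u * a `^ (- 2^-1).
Proof.
move=> a0 u0; have a0' : 0 <= a by exact: ltW.
by rewrite powRN powR12_sqrt // sqrtrM // sqrtrV.
Qed.

Lemma powRND (R : realType) (x a b : R) : 0 < x ->
  x `^ (- (a + b)) = x `^ (- a) * x `^ (- b).
Proof. by move=> x0; rewrite opprD powRD // (gt_eqF x0) implybT. Qed.
Lemma h2_aux (R : numFieldType) (a : R) : 0 < a -> (a *+ 2)^-1 *+ 2 = a^-1.
Proof. move=> a0.
have e1 : a *+ 2 = a * 2%:R by rewrite mulr_natr.
by rewrite -mulr_natr e1 invfM mulfVK // pnatr_eq0.
Qed.

Lemma gauss1 (R : realType) (a m C : R) : 0 < a -> 0 <= C ->
  (\int[@lebesgue_measure R]_(y in [set: R]) (C * expR (- (a * (y - m) ^+ 2)))%:E)%E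
  = (C * Num.sqrt (pi / a))%:E.
Proof.
move=> a0 C0.
set s := Num.sqrt ((a *+ 2)^-1).
have s2 : s ^+ 2 = (a *+ 2)^-1 by rewrite sqr_sqrtr // invr_ge0 mulrn_wge0 // ltW.
have s0 : s != 0.
  by rewrite gt_eqF // sqrtr_gt0 invr_gt0 mulrn_wgt0.
have pk0 : 0 < normal_peak s by exact: normal_peak_gt0.
transitivity (\int[@lebesgue_measure R]_(y in [set: R])
   ((C / normal_peak s)%:E * (normal_pdf m s y)%:E))%E.
  apply: eq_integral => y _; rewrite -EFinM normal_pdfE //.
  congr (_%:E); rewrite [RHS]mulrA divfK ?gt_eqF //; congr (_ * _).
  rewrite /normal_fun s2 mulNr; congr (expR (- _)).
  by rewrite h2_aux // invrK mulrC.
rewrite ge0_integralZl //; last first.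
- by rewrite lee_fin divr_ge0 // ltW.
- by move=> y _; rewrite lee_fin normal_pdf_ge0.
- by apply/measurable_EFinP; exact: measurable_normal_pdf.
rewrite integral_normal_pdf mule1; congr (_%:E); congr (_ * _).
by rewrite /normal_peak invrK s2 -mulrnAl h2_aux // mulrC.
Qed.


Section Energy.
Context (R : realType) (I : eqType) (U : seq I) (p : I -> I) (w : I -> R) (lam : R).
Hypothesis uU : uniq U.
Hypothesis hU : forall r, r \in U -> p r \in U /\ p (p r) = r.
Hypothesis hw : forall r, w (p r) = w r.

Definition eterm (D : seq I) (x : I -> R) r :=
  if r \in D then w r * (if p r \in D then x r ^+ 2 + lam * x r * x (p r)
                         else (1 - lam ^+ 2) * x r ^+ 2) else 0.
Definition En D x := \sum_(r <- U) eterm D x r.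

Definition Acoef (s : seq I) c :=
  if p c == c then 1 + lam else if p c \in s then 1 else 1 - lam ^+ 2.
Definition mshift (s : seq I) c (x : I -> R) :=
  if (p c != c) && (p c \in s) then - (lam * x (p c)) else 0.

Lemma eterm_rcons s c x y r : r \in U -> c \in U -> c \notin s ->
  {subset s <= U} ->
  eterm (rcons s c) (fun i => if i == c then y else x i) r =
  eterm s x r
  + (if r == c then w c * (if p c == c then (1 + lam) * y ^+ 2
                           else if p c \in s then y ^+ 2 + lam * y * x (p c)
                           else (1 - lam ^+ 2) * y ^+ 2) else 0)
  + (if r == p c then (if (p c != c) && (p c \in s) then
        w c * (lam ^+ 2 * x (p c) ^+ 2 + lam * x (p c) * y) else 0) else 0).
Proof.
move=> rU cU cs sU.
have [pcU ppc] := hU c cU.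
have [prU ppr] := hU r rU.
rewrite /eterm !mem_rcons !in_cons.
have [rc|rc] := eqVneq r c.
  subst r; rewrite (negbTE cs) /=.
  have [pcc|pcc] := eqVneq (p c) c.
    rewrite ?pcc ?eqxx /=; ring.
  rewrite /= ?(eq_sym c) ?(negbTE pcc) /=. by rewrite add0r addr0.
have [rpc|rpc] := eqVneq r (p c).
  subst r; rewrite ppc eqxx /= hw.
  have pcc : (p c != c) by [].
  rewrite pcc /=.
  case pcs: (p c \in s) => /=; last by ring.
  rewrite (negbTE cs); ring.
have prc : p r != c.
  by apply/eqP => E; move: rpc; rewrite -E ppr eqxx.
rewrite (negbTE prc) /=.
by rewrite !addr0.
Qed.

Lemma En_rcons s c x y : c \in U -> c \notin s -> {subset s <= U} ->
  En (rcons s c) (fun i => if i == c then y else x i) =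
  En s x + w c * Acoef s c * (y - mshift s c x) ^+ 2.
Proof.
move=> cU cs sU.
rewrite /En (eq_big_seq _ (fun r rU => eterm_rcons s c x y r rU cU cs sU)).
rewrite !big_split /= sum_if_eq // sum_if_eq // cU.
have [pcU ppc] := hU c cU; rewrite pcU -addrA; congr (_ + _).
rewrite /Acoef /mshift.
have [pcc|pcc] := eqVneq (p c) c => /=.
  by rewrite subr0; ring.
by case: (p c \in s) => /=; rewrite ?subr0; ring.
Qed.

Definition gx (s : seq I) r : R :=
  if p r == r then 0 else if p r \in s then 4^-1 else 2^-1.
Definition ex (s : seq I) := \sum_(r <- s) gx s r.
Definition cntf (s : seq I) := count (fun r => p r == r) s.

Lemma ex_rcons s c : c \in U -> c \notin s -> uniq s -> {subset s <= U} ->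
  ex (rcons s c) = ex s + (if (p c != c) && (p c \notin s) then 2^-1 else 0).
Proof.
move=> cU cs us sU.
have [pcU ppc] := hU c cU.
rewrite /ex big_rcons /=.
have -> : \sum_(r <- s) gx (rcons s c) r =
          \sum_(r <- s) (gx s r - (if r == p c then 4^-1 else 0)).
  apply: eq_big_seq => r rs.
  have [prU ppr] := hU r (sU r rs).
  rewrite /gx !mem_rcons !in_cons.
  have [rpc|rpc] := eqVneq r (p c).
    subst r; rewrite ppc eqxx /= (negbTE cs).
    have -> : (c == p c) = false.
      by apply/negbTE/eqP => E; move: cs; rewrite {1}E rs.
    by rewrite /=; field.
  have prc : p r != c.
    by apply/eqP => E; move: rpc; rewrite -E ppr eqxx.
  by rewrite (negbTE prc) /= subr0.
rewrite sumrB sum_if_eq // /gx mem_rcons in_cons.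
have [pcc|pcc] := eqVneq (p c) c => /=.
  by rewrite pcc (negbTE cs) /= !addr0 subr0.
case pcs: (p c \in s) => /=.
  by rewrite addr0 subrK.
by rewrite subr0.
Qed.

Definition Pr (kap : R) (s : seq I) :=
  (\prod_(c <- s) Num.sqrt (pi / (kap * w c))) *
  ((1 + lam) `^ (- ((cntf s)%:R / 2)) * (1 - lam ^+ 2) `^ (- ex s)).

Lemma main_int (kap : R) : 0 < kap -> (forall r, 0 < w r) -> -1 < lam < 1 ->
  forall s, uniq s -> {subset s <= U} -> forall C x0, 0 <= C ->
  iter_int s (fun x => (C * expR (- (kap * En s x)))%:E) x0 = (C * Pr kap s)%:E.
Proof.
move=> k0 w0 /andP[l1 l2].
have l1p : 0 < 1 + lam by lra.
have l2p : 0 < 1 - lam ^+ 2 by nra.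
elim/last_ind => [|s c IH] us sU C x0 C0.
  rewrite /= /En big1 => [|r _]; last by rewrite /eterm in_nil.
  rewrite /Pr /ex /cntf !big_nil /= mulr0 oppr0 expR0 mul0r oppr0 !powRr0.
  by rewrite !mulr1.
move: us; rewrite rcons_uniq => /andP[cs us'].
have cU : c \in U by apply: sU; rewrite mem_rcons mem_head.
have sU' : {subset s <= U}.
  by move=> r rs; apply: sU; rewrite mem_rcons in_cons rs orbT.
have A0 : 0 < Acoef s c.
  by rewrite /Acoef; case: (p c == c) => //; case: (p c \in s).
rewrite iter_int_rcons.
rewrite (@iter_int_ext _ _ _ _ (fun x => ((C * Num.sqrt (pi / (kap * w c * Acoef s c)))
        * expR (- (kap * En s x)))%:E)); last first.
  move=> x.
  under eq_integral => y _ do rewrite En_rcons //.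
  transitivity (\int[@lebesgue_measure R]_(y in [set: R])
    ((C * expR (- (kap * En s x))) *
       expR (- ((kap * w c * Acoef s c) * (y - mshift s c x) ^+ 2)))%:E)%E.
    apply: eq_integral => y _; congr (_%:E).
    by rewrite -[RHS]mulrA -expRD; congr (_ * expR _); ring.
  rewrite gauss1 //; last by rewrite mulr_ge0 // expR_ge0.
    by congr (_%:E); ring.
  by rewrite mulr_gt0 // mulr_gt0.
rewrite IH //; last by rewrite mulr_ge0 // sqrtr_ge0.
congr (_%:E).
have -> : pi / (kap * w c * Acoef s c) = (pi / (kap * w c)) / Acoef s c.
  by rewrite invfM mulrA.
rewrite sqrt_split //; last by rewrite divr_ge0 ?pi_ge0 // ltW // mulr_gt0.
rewrite /Pr big_rcons /= ex_rcons // /cntf -cats1 count_cat /= addn0.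
rewrite /Acoef.
have [pcc|pcc] := eqVneq (p c) c => /=.
  rewrite addr0 natrD [(_ + 1) / 2]mulrDl powRND // mul1r.
  ring.
rewrite addn0.
case pcs: (p c \in s) => /=.
  rewrite addr0 powR1 /=; ring.
rewrite powRND //; ring.
Qed.
End Energy.

Set Implicit Arguments. Unset Strict Implicit. Unset Printing Implicit Defensive.

Definition Pm N (t : idx N) : idx N := let: (i, j, k, l) := t in (i, k, j, l).
Definition piN N (r : idx N) : idx N := rep (Pm r).
Definition wN (R : realType) N (r : idx N) : R := if trq r == r then 1 else 2.

Lemma trqK N (t : idx N) : trq (trq t) = t.
Proof. by case: t => [[[i j] k] l]. Qed.
Lemma PmK N (t : idx N) : Pm (Pm t) = t.
Proof. by case: t => [[[i j] k] l]. Qed.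
Lemma trqPm N (t : idx N) : trq (Pm t) = Pm (trq t).
Proof. by case: t => [[[i j] k] l]. Qed.

Lemma rep_trq N (t : idx N) : rep (trq t) = rep t.
Proof.
rewrite /rep trqK.
case: (leqP (enum_rank t) (enum_rank (trq t))) => h.
  case: ifP => // h2.
  have E : enum_rank (trq t) = enum_rank t.
    by apply/val_inj/eqP; rewrite /= eqn_leq h h2.
  by rewrite (enum_rank_inj E).
by rewrite ltnW.
Qed.

Lemma rep_cases N (t : idx N) : rep t = t \/ rep t = trq t.
Proof. by rewrite /rep; case: ifP; auto. Qed.

Lemma rep_rep N (t : idx N) : rep (rep t) = rep t.
Proof. by case: (rep_cases t) => E; rewrite {1}E ?rep_trq. Qed.

Lemma repPm N (t : idx N) : rep (Pm (rep t)) = rep (Pm t).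
Proof. by case: (rep_cases t) => E; rewrite E -?trqPm ?rep_trq. Qed.

Lemma mem_reps N (r : idx N) : (r \in reps N) = (rep r == r).
Proof. by rewrite /reps mem_filter mem_enum andbT. Qed.

Lemma uniq_reps N : uniq (reps N).
Proof. by rewrite /reps filter_uniq // enum_uniq. Qed.

Lemma rep_fix N (t : idx N) : trq t = t -> rep t = t.
Proof. by move=> h; case: (rep_cases t) => ->. Qed.

Lemma trq_fix_rep N (t : idx N) : (trq (rep t) == rep t) = (trq t == t).
Proof.
case: (rep_cases t) => -> //; rewrite trqK.
by apply/eqP/eqP => [E|E]; rewrite -{1}E ?trqK.
Qed.

Lemma sum_rep (R : realType) N (F : idx N -> R) :
  \sum_(t : idx N) F (rep t) = \sum_(r <- reps N) wN R r * F r.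
Proof.
rewrite /reps big_filter big_enum_cond /=.
rewrite (bigID (fun t => rep t == t)) /=.
have -> : \sum_(t | rep t != t) F (rep t) =
          \sum_(t | (rep t == t) && (trq t != t)) F t.
  rewrite (eq_bigr (fun t => F (trq t))); last first.
    by move=> t; case: (rep_cases t) => -> //; rewrite eqxx.
  rewrite (reindex_inj (can_inj (@trqK N))) /=.
  apply: eq_big => [u|u _]; last by rewrite trqK.
  rewrite rep_trq.
  case: (rep_cases u) => ->; first by rewrite eqxx eq_sym.
  by rewrite eqxx /=; case: (trq u == u).
rewrite (eq_bigr (fun t => F t)); last by move=> t /eqP ->.
rewrite [X in X + _](bigID (fun t => trq t == t)) /=.
rewrite [in RHS](bigID (fun t => trq t == t)) /=.
rewrite -addrA; congr (_ + _).
  apply: eq_big => // t /andP[_ h].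
  by rewrite /wN h mul1r.
rewrite -big_split /=; apply: eq_big => // t /andP[_ /negbTE h].
by rewrite /wN h mulr2n mulrDl mul1r.
Qed.

Lemma sum4 (R : realType) N (f : idx N -> R) :
  \sum_(i < N) \sum_(j < N) \sum_(k < N) \sum_(l < N) f (i, j, k, l) =
  \sum_(t : idx N) f t.
Proof.
rewrite pair_big /= pair_big /= pair_big /=.
by apply: eq_bigr => [[[[i j] k] l]] _.
Qed.

Lemma hU_reps N : forall r, r \in reps N -> piN r \in reps N /\ piN (piN r) = r.
Proof.
move=> r; rewrite !mem_reps => /eqP rr; split; first by rewrite /piN rep_rep.
by rewrite /piN repPm PmK rr.
Qed.

Lemma hw_reps (R : realType) N (r : idx N) : wN R (piN r) = wN R r.
Proof.
rewrite /wN /piN trq_fix_rep trqPm (inj_eq (can_inj (@PmK N))) //.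
Qed.

Lemma S_ST_En (R : realType) N (lam : R) (x : idx N -> R) :
  S_ST lam (tensor_of x) =
  (N%:R / 2) * @En R (idx N) (reps N) (@piN N) (@wN R N) lam (reps N) x.
Proof.
rewrite /S_ST /tensor_of.
rewrite (sum4 (fun t => x (rep t) * x (rep t))).
have -> : \sum_(i < N) \sum_(j < N) \sum_(k < N) \sum_(l < N)
            x (rep (i, j, k, l)) * x (rep (i, k, j, l)) =
          \sum_(t : idx N) x (rep t) * x (piN (rep t)).
  rewrite -(sum4 (fun t => x (rep t) * x (piN (rep t)))).
  apply: eq_bigr => i _; apply: eq_bigr => j _; apply: eq_bigr => k _.
  by apply: eq_bigr => l _; rewrite /piN repPm.
rewrite (sum_rep (fun r => x r * x r)) (sum_rep (fun r => x r * x (piN r))).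
have -> : @En R (idx N) (reps N) (@piN N) (@wN R N) lam (reps N) x =
   \sum_(r <- reps N) (wN R r * (x r * x r) + lam * (wN R r * (x r * x (piN r)))).
  apply: eq_big_seq => r rU; have [pU _] := hU_reps rU.
  by rewrite /eterm rU pU; ring.
rewrite big_split /= -mulr_sumr; ring.
Qed.

Lemma sum_delta (R : realType) N (i : 'I_N) (c : R) :
  \sum_(l < N) (if l == i then c else 0) = c.
Proof. by rewrite -big_mkcond big_pred1_eq. Qed.

Lemma sum_cst (R : realType) N (c : R) : \sum_(l < N) c = N%:R * c.
Proof. by rewrite sumr_const card_ord mulr_natl. Qed.

Lemma sum_count (R : realType) (I : eqType) (P : pred I) (s : seq I) :
  \sum_(r <- s) ((P r)%:R : R) = (count P s)%:R.
Proof.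
elim: s => [|a s IH]; first by rewrite big_nil.
by rewrite big_cons IH /= natrD.
Qed.

Lemma sum_fix (R : realType) N :
  \sum_(t : idx N) (((trq t == t) : bool)%:R : R) = N%:R ^+ 2.
Proof.
rewrite -(sum4 (fun t => (((trq t == t) : bool)%:R : R))).
transitivity (\sum_(i < N) \sum_(j < N) \sum_(k < N) \sum_(l < N)
   (if l == i then (if k == j then 1 else 0) else 0 : R)).
  apply: eq_bigr => i _; apply: eq_bigr => j _; apply: eq_bigr => k _.
  apply: eq_bigr => l _; rewrite /= !xpair_eqE (eq_sym i l) (eq_sym j k).
  by case: (l == i); case: (k == j).
under eq_bigr do under eq_bigr do under eq_bigr do rewrite sum_delta.
under eq_bigr do under eq_bigr do rewrite sum_delta.
by rewrite sum_cst sum_cst mulr1 expr2.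
Qed.

Lemma sum_G (R : realType) N :
  \sum_(t : idx N) ((((t.1.1.2 == t.1.2) || (t.1.1.1 == t.2)) : bool)%:R : R)
  = 2 * N%:R ^+ 3 - N%:R ^+ 2.
Proof.
rewrite -(sum4 (fun t => ((((t.1.1.2 == t.1.2) || (t.1.1.1 == t.2)) : bool)%:R : R))).
transitivity (\sum_(i < N) \sum_(j < N) \sum_(k < N) \sum_(l < N)
   ((if k == j then 1 else 0) + (if l == i then 1 else 0)
    - (if l == i then (if k == j then 1 else 0) else 0) : R)).
  apply: eq_bigr => i _; apply: eq_bigr => j _; apply: eq_bigr => k _.
  apply: eq_bigr => l _; rewrite /= (eq_sym i l) (eq_sym j k).
  by case: (l == i); case: (k == j); rewrite /=; ring.
under eq_bigr do under eq_bigr do under eq_bigr do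
  rewrite sumrB big_split /= sum_delta sum_delta sum_cst.
under eq_bigr do under eq_bigr do
  rewrite sumrB big_split /= -mulr_sumr !sum_delta !sum_cst.
under eq_bigr do rewrite sum_cst.
rewrite sum_cst; ring.
Qed.

Definition Gb N (t : idx N) : bool := (t.1.1.2 == t.1.2) || (t.1.1.1 == t.2).

Lemma Gb_trq N (t : idx N) : Gb (trq t) = Gb t.
Proof. by case: t => [[[i j] k] l]; rewrite /Gb /= (eq_sym k j) (eq_sym l i). Qed.

Lemma Gb_rep N (t : idx N) : Gb (rep t) = Gb t.
Proof. by case: (rep_cases t) => ->; rewrite ?Gb_trq. Qed.

Lemma fix_Gb N (t : idx N) : trq t == t -> Gb t.
Proof.
case: t => [[[i j] k] l]; rewrite /Gb /= !xpair_eqE => /andP[/andP[/andP[_ h] _] _].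
by rewrite eq_sym h.
Qed.

Lemma rep_eqE N (r u : idx N) : rep r = r -> (rep u == r) = (u == r) || (trq u == r).
Proof.
move=> rr; apply/idP/idP.
  by case: (rep_cases u) => -> ->; rewrite ?orbT.
case/orP => /eqP E; first by rewrite E rr.
have -> : u = trq r by rewrite -E trqK.
by rewrite rep_trq rr.
Qed.

Lemma piN_fixE N (r : idx N) : rep r = r -> (piN r == r) = Gb r.
Proof.
move=> rr; rewrite /piN rep_eqE // trqPm.
case: r rr => [[[i j] k] l] _; rewrite /Gb /= !xpair_eqE !eqxx /= !andbT.
rewrite (eq_sym k j) (eq_sym l i).
by case: (j == k); case: (i == l).
Qed.

Lemma sum_const_seq (R : realType) (I : eqType) (s : seq I) (c : R) :
  \sum_(r <- s) c = (size s)%:R * c.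
Proof.
elim: s => [|a s IH]; first by rewrite big_nil mul0r.
by rewrite big_cons IH /= -addn1 natrD; ring.
Qed.

Lemma card_idx N : #|idx N| = (N ^ 4)%N.
Proof. by rewrite /idx !card_prod !card_ord !expnS expn0 muln1 !mulnA. Qed.

Lemma cntT_eq (R : realType) N :
  ((count (fun r => trq r == r) (reps N))%:R : R) = N%:R ^+ 2.
Proof.
rewrite -(sum_fix R N).
have := sum_rep (fun r : idx N => (((trq r == r) : bool)%:R : R)).
under eq_bigr do rewrite trq_fix_rep.
move=> ->; rewrite -sum_count; apply: eq_bigr => r _.
by rewrite /wN; case: (trq r == r); rewrite ?mul1r ?mulr0.
Qed.

Lemma size_reps (R : realType) N :
  ((size (reps N))%:R : R) * 2 = N%:R ^+ 4 + N%:R ^+ 2.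
Proof.
have := sum_rep (fun _ : idx N => (1 : R)).
rewrite sumr_const card_idx.
rewrite (eq_bigr (fun r => 2 - (((trq r == r) : bool)%:R : R))); last first.
  by move=> r _; rewrite /wN; case: (trq r == r); rewrite /= mulr1; ring.
rewrite sumrB sum_const_seq sum_count cntT_eq => h.
have -> : (N%:R ^+ 4 : R) = 1 *+ (N ^ 4) by rewrite -natrX.
rewrite h; ring.
Qed.

Lemma cntG_eq (R : realType) N :
  ((count (@Gb N) (reps N))%:R : R) = N%:R ^+ 3.
Proof.
have := sum_rep (fun r : idx N => (((Gb r) : bool)%:R : R)).
under eq_bigr do rewrite Gb_rep.
rewrite (sum_G R N).
rewrite (eq_bigr (fun r => 2 * (((Gb r) : bool)%:R : R) - (((trq r == r) : bool)%:R : R)));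
  last first.
  move=> r _; rewrite /wN; case E: (trq r == r).
    by rewrite (fix_Gb E) /=; ring.
  by rewrite /=; ring.
rewrite sumrB -mulr_sumr !sum_count cntT_eq => h.
have : 2 * (count (@Gb N) (reps N))%:R = 2 * (N%:R ^+ 3 : R) by lra.
have n2 : (2:R) != 0 by rewrite pnatr_eq0.
by move/(mulfI n2).
Qed.

Unset Implicit Arguments.


Lemma ex_reps (R : realType) N :
  ex R (idx N) (@piN N) (reps N) =
  (((size (reps N))%:R : R) - (count (@Gb N) (reps N))%:R) / 4.
Proof.
rewrite /ex (eq_big_seq (fun r => 4^-1 * (1 - (((@Gb N r) : bool)%:R : R)))); last first.
  move=> r rU; have [pU _] := hU_reps rU.
  rewrite /gx pU piN_fixE; last by move: rU; rewrite mem_reps => /eqP.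
  by case: (Gb r) => /=; ring.
rewrite -mulr_sumr sumrB sum_const_seq sum_count; ring.
Qed.

Lemma cntf_reps N : cntf (idx N) (@piN N) (reps N) = count (@Gb N) (reps N).
Proof.
apply: eq_in_count => r; rewrite mem_reps => /eqP rr.
exact: piN_fixE.
Qed.

Lemma Z_eq (R : realType) N (lam : R) : (1 <= N)%N -> -1 < lam < 1 ->
  Z_ST N lam = (Pr R (idx N) (@piN N) (@wN R N) lam (N%:R / 2) (reps N))%:E.
Proof.
move=> N1 hl.
rewrite /Z_ST.
rewrite (@iter_int_ext _ _ _ _ (fun x => (1 * expR (- (N%:R / 2 *
   @En R (idx N) (reps N) (@piN N) (@wN R N) lam (reps N) x)))%:E)); last first.
  by move=> x; rewrite S_ST_En mul1r.
rewrite main_int //.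
- by rewrite mul1r.
- exact: uniq_reps.
- exact: hU_reps.
- exact: hw_reps.
- by rewrite divr_gt0 // ltr0n.
- by move=> r; rewrite /wN; case: (trq r == r).
- exact: uniq_reps.
Qed.

Theorem proposition5p8 (R : realType) (N : nat) (lam : R) :
  (1 <= N)%N -> -1 < lam < 1 ->
  [/\ (0 < @Z_ST R N 0)%E, (@Z_ST R N 0 < +oo)%E &
      Z_ST N lam =
        (@Z_ST R N 0 *
         ((1 + lam) `^ (- (2^-1) * ((N%:R * (N%:R + 1)) / 2) ^+ 2) *
          (1 - lam) `^ (- (2^-1) * ((N%:R * (N%:R - 1)) / 2) ^+ 2))%:E)%E].
Proof.
move=> N1 hl.
have h0 : -1 < (0:R) < 1 by rewrite ltrN10 ltr01.
rewrite (@Z_eq R N 0 N1 h0) (@Z_eq R N lam N1 hl).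
set P0 := \prod_(c <- reps N) Num.sqrt (pi / (N%:R / 2 * wN R c)).
have P0E : Pr R (idx N) (@piN N) (@wN R N) 0 (N%:R / 2) (reps N) = P0.
  by rewrite /Pr addr0 expr0n /= subr0 powR1 /= mulr1 mulr1.
have P0p : 0 < P0.
  apply: prodr_gt0 => c _; rewrite sqrtr_gt0 divr_gt0 ?pi_gt0 //.
  rewrite mulr_gt0 ?divr_gt0 ?ltr0n //.
  by rewrite /wN; case: (trq c == c).
rewrite P0E; split.
- by rewrite lte_fin.
- exact: ltry.
rewrite -EFinM /Pr; congr (_%:E); rewrite -/P0; congr (_ * _).
move: hl => /andP[l1 l2].
have l1p : 0 < 1 + lam by lra.
have l2p : 0 < 1 - lam by lra.
rewrite ex_reps cntf_reps cntG_eq.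
have hs := size_reps R N.
have -> : 1 - lam ^+ 2 = (1 + lam) * (1 - lam) by ring.
rewrite powRM ?ltW // mulrA -powRD; last by rewrite (gt_eqF l1p) implybT.
have hz : ((size (reps N))%:R : R) = (N%:R ^+ 4 + N%:R ^+ 2) / 2.
  by rewrite -hs mulfK // pnatr_eq0.
rewrite hz; congr (_ `^ _ * _ `^ _); by field.
Qed.
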